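(* Let $a\in(0,\infty)$ and $b\in\mathbb{Z}\cap[0,a+1)$. Then (i) $\exp\left(-\frac{b^3}{6a^2}\right)\le \dfrac{a^{\overline{b}}}{a^b\exp\left(\frac{b(b-1)}{2a}\right)}\le 1$; (ii) $1\le \dfrac{a^{\overline{b}}}{a^b\exp\left(\frac{b(b-1)}{2a}-\frac{b(b-1)(2b-1)}{12a^2}\right)}\le \exp\left(\frac{b^4}{12a^3}\right)$.
   Context: $a^{\overline{b}}=a(a+1)\cdots(a+b-1)$ denotes the rising factorial (with $a^{\overline{0}}=1$). *)

(* Defs.v *)
From Stdlib Require Import Reals.
Open Scope R_scope.

Fixpoint rising_fact (a : R) (b : nat) : R :=
  match b with
  | O => 1
  | S k => rising_fact a k * (a + INR k)
  end.

(* Main.v *)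
Require Import Defs.
From Stdlib Require Import Reals Lra Psatz.
From Coquelicot Require Import Coquelicot.
Open Scope R_scope.
Lemma mono (f df : R -> R) (x : R) : 0 <= x ->
  (forall t, is_derive f t (df t)) -> (forall t, 0 <= t -> 0 <= df t) -> f 0 <= f x.
Proof.
  intros hx hd hp.
  destruct (MVT_gen f 0 x df) as [c [hc e]].
  - intros; apply hd.
  - intros t _. apply continuity_pt_filterlim. apply (ex_derive_continuous (K:=R_AbsRing) (V:=R_NormedModule)).
    eexists; apply hd.
  - rewrite Rmin_left in hc by lra. rewrite Rmax_right in hc by lra.
    assert (0 <= df c * (x - 0)) by (apply Rmult_le_pos; [apply hp|]; lra). lra.
Qed.

Lemma L2 (x : R) : 0 <= x -> exp (x - x^2/2) <= 1 + x.
Proof.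
  intros hx.
  pose (h := fun t => (1+t)*exp(-t + t^2/2)).
  assert (H : h 0 <= h x).
  { apply (mono h (fun t => t^2 * exp(-t+t^2/2))); auto.
    - intros t. unfold h. auto_derive; auto; replace (t*(t*1)) with (t^2) by ring; unfold Rdiv; field.
    - intros t _. apply Rmult_le_pos; [nra| apply Rlt_le, exp_pos]. }
  unfold h in H; cbv beta in H. replace (-0 + 0^2/2) with 0 in H by field. rewrite exp_0 in H.
  replace (1 + x) with (exp (x - x^2/2) * ((1+x) * exp (-x + x^2/2))).
  - pose proof (exp_pos (x - x^2/2)). nra.
  - rewrite (Rmult_comm (1+x)), <- Rmult_assoc, <- exp_plus.
    replace (x - x ^ 2 / 2 + (- x + x ^ 2 / 2)) with 0 by field. rewrite exp_0. ring.
Qed.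

Lemma L3 (x : R) : 0 <= x -> 1 + x <= exp (x - x^2/2 + x^3/3).
Proof.
  intros hx.
  pose (h := fun t => - ((1+t)*exp(-(t - t^2/2 + t^3/3)))).
  assert (H : h 0 <= h x).
  { apply (mono h (fun t => t^3 * exp(-(t - t^2/2+t^3/3)))); auto.
    - intros t. unfold h. auto_derive; auto;
      replace (- (t + - (t * (t * 1) * / 2) + t * (t * (t * 1)) * / 3)) with (- (t - t ^ 2 / 2 + t ^ 3 / 3)) by field; field.
    - intros t ht. apply Rmult_le_pos; [apply pow_le; lra| apply Rlt_le, exp_pos]. }
  unfold h in H; cbv beta in H. replace (-(0 - 0^2/2 + 0^3/3)) with 0 in H by field. rewrite exp_0 in H.
  replace (1 + x) with (exp (x - x^2/2 + x^3/3) * ((1+x) * exp (-(x - x^2/2 + x^3/3)))).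
  - pose proof (exp_pos (x - x^2/2 + x^3/3)). nra.
  - rewrite (Rmult_comm (1+x)), <- Rmult_assoc, <- exp_plus.
    replace (x - x ^ 2 / 2 + x^3/3 + - (x - x ^ 2 / 2 + x^3/3)) with 0 by field. rewrite exp_0. ring.
Qed.

Lemma exp_mono (x y : R) : x <= y -> exp x <= exp y.
Proof. intros [h|h]. apply Rlt_le, exp_increasing; auto. subst; lra. Qed.


Lemma rising_nonneg (a : R) (b : nat) : 0 <= a -> 0 <= rising_fact a b.
Proof. intros ha. induction b. simpl; lra. simpl. pose proof (pos_INR b). nra. Qed.

Lemma indA (a : R) (b : nat) : 0 < a ->
  rising_fact a b <= a ^ b * exp (INR b * (INR b - 1) / (2 * a)).
Proof.
  intros ha. assert (ha0 : a <> 0) by lra. induction b as [|b IH].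
  - simpl. replace (0 * (0 - 1) / (2 * a)) with 0 by (field; auto). rewrite exp_0; lra.
  - simpl rising_fact. rewrite S_INR.
    replace ((INR b + 1) * (INR b + 1 - 1) / (2 * a))
      with (INR b * (INR b - 1) / (2 * a) + INR b / a) by (field; auto).
    rewrite exp_plus. simpl pow.
    assert (H1 : a + INR b <= a * exp (INR b / a)).
    { pose proof (exp_ineq1_le (INR b / a)).
      replace (a + INR b) with (a * (1 + INR b / a)) by (field; auto). nra. }
    assert (0 <= rising_fact a b).
    { apply rising_nonneg; lra. }
    pose proof (pos_INR b).
    replace (a * a ^ b * (exp (INR b * (INR b - 1) / (2 * a)) * exp (INR b / a)))
      with ((a ^ b * exp (INR b * (INR b - 1) / (2 * a))) * (a * exp (INR b / a))) by ring.
    apply Rmult_le_compat; lra.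
Qed.

Lemma indB (a : R) (b : nat) : 0 < a ->
  a ^ b * exp (INR b * (INR b - 1) / (2 * a)
                - INR b * (INR b - 1) * (2 * INR b - 1) / (12 * a ^ 2)) <= rising_fact a b.
Proof.
  intros ha. assert (ha0 : a <> 0) by lra. induction b as [|b IH].
  - change (INR 0) with 0. change (a^0) with 1. simpl rising_fact.
    replace (0 * (0 - 1) / (2 * a) - 0 * (0 - 1) * (2 * 0 - 1) / (12 * a^2))
      with 0 by (field; auto). rewrite exp_0; lra.
  - simpl rising_fact. rewrite S_INR.
    replace ((INR b + 1) * (INR b + 1 - 1) / (2 * a)
       - (INR b + 1) * (INR b + 1 - 1) * (2 * (INR b + 1) - 1) / (12 * a ^ 2))
      with ((INR b * (INR b - 1) / (2 * a)
                - INR b * (INR b - 1) * (2 * INR b - 1) / (12 * a ^ 2))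
            + (INR b / a - (INR b / a)^2/2)) by (field; auto).
    rewrite exp_plus. change (a ^ S b) with (a * a ^ b).
    set (E1 := exp (INR b * (INR b - 1) / (2 * a)
                - INR b * (INR b - 1) * (2 * INR b - 1) / (12 * a ^ 2))) in *.
    set (E2 := exp (INR b / a - (INR b / a)^2/2)).
    pose proof (pos_INR b).
    assert (H1 : a * exp (INR b / a - (INR b / a)^2/2) <= a + INR b).
    { assert (0 <= INR b / a) by (apply Rdiv_le_0_compat; lra).
      pose proof (L2 (INR b / a) H0).
      replace (a + INR b) with (a * (1 + INR b / a)) by (field; auto). nra. }
    pose proof (pow_lt a b ha).
    assert (0 < E1) by apply exp_pos. assert (0 < E2) by apply exp_pos.
    replace (a * a ^ b * (E1 * E2)) with ((a ^ b * E1) * (a * E2)) by ring.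
    apply Rmult_le_compat; try lra.
    + apply Rmult_le_pos; lra.
    + apply Rmult_le_pos; lra.
    + exact H1.
Qed.

Lemma indC (a : R) (b : nat) : 0 < a ->
  rising_fact a b <= a ^ b * exp ((INR b * (INR b - 1) / (2 * a)
                - INR b * (INR b - 1) * (2 * INR b - 1) / (12 * a ^ 2))
                + INR b ^ 2 * (INR b - 1) ^ 2 / (12 * a ^ 3)).
Proof.
  intros ha. assert (ha0 : a <> 0) by lra. induction b as [|b IH].
  - change (INR 0) with 0. change (a^0) with 1. simpl rising_fact.
    replace ((0 * (0 - 1) / (2 * a) - 0 * (0 - 1) * (2 * 0 - 1) / (12 * a^2))
       + 0 ^ 2 * (0 - 1) ^ 2 / (12 * a ^ 3))
      with 0 by (field; auto). rewrite exp_0; lra.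
  - simpl rising_fact. rewrite S_INR.
    replace ((INR b + 1) * (INR b + 1 - 1) / (2 * a)
       - (INR b + 1) * (INR b + 1 - 1) * (2 * (INR b + 1) - 1) / (12 * a ^ 2)
       + (INR b + 1) ^ 2 * (INR b + 1 - 1) ^ 2 / (12 * a ^ 3))
      with (((INR b * (INR b - 1) / (2 * a)
                - INR b * (INR b - 1) * (2 * INR b - 1) / (12 * a ^ 2))
                + INR b ^ 2 * (INR b - 1) ^ 2 / (12 * a ^ 3))
            + (INR b / a - (INR b / a)^2/2 + (INR b / a)^3/3)) by (field; auto).
    rewrite exp_plus. change (a ^ S b) with (a * a ^ b).
    set (E1 := exp ((INR b * (INR b - 1) / (2 * a)
                - INR b * (INR b - 1) * (2 * INR b - 1) / (12 * a ^ 2))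
                + INR b ^ 2 * (INR b - 1) ^ 2 / (12 * a ^ 3))) in *.
    set (E2 := exp (INR b / a - (INR b / a)^2/2 + (INR b / a)^3/3)).
    pose proof (pos_INR b).
    assert (H1 : a + INR b <= a * E2).
    { assert (0 <= INR b / a) by (apply Rdiv_le_0_compat; lra).
      pose proof (L3 (INR b / a) H0).
      replace (a + INR b) with (a * (1 + INR b / a)) by (field; auto). unfold E2. nra. }
    assert (0 <= rising_fact a b) by (apply rising_nonneg; lra).
    replace (a * a ^ b * (E1 * E2)) with ((a ^ b * E1) * (a * E2)) by ring.
    apply Rmult_le_compat; lra.
Qed.

Lemma div_le1 (r d u : R) : 0 < d -> r <= u * d -> r / d <= u.
Proof. intros hd h. apply Rmult_le_reg_r with d; auto. unfold Rdiv.
  rewrite Rmult_assoc, Rinv_l by lra. lra. Qed.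

Lemma div_le2 (r d u : R) : 0 < d -> u * d <= r -> u <= r / d.
Proof. intros hd h. apply Rmult_le_reg_r with d; auto. unfold Rdiv.
  rewrite Rmult_assoc, Rinv_l by lra. lra. Qed.

Theorem lemma2 (a : R) (b : nat) (ha : 0 < a) (hb : INR b < a + 1) :
  (exp (- (INR b ^ 3 / (6 * a ^ 2)))
     <= rising_fact a b / (a ^ b * exp (INR b * (INR b - 1) / (2 * a)))
   /\ rising_fact a b / (a ^ b * exp (INR b * (INR b - 1) / (2 * a))) <= 1)
  /\
  (1 <= rising_fact a b /
          (a ^ b * exp (INR b * (INR b - 1) / (2 * a)
                        - INR b * (INR b - 1) * (2 * INR b - 1) / (12 * a ^ 2)))
   /\ rising_fact a b /
          (a ^ b * exp (INR b * (INR b - 1) / (2 * a)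
                        - INR b * (INR b - 1) * (2 * INR b - 1) / (12 * a ^ 2)))
      <= exp (INR b ^ 4 / (12 * a ^ 3))).
Proof.
  pose proof (indA a b ha) as HA. pose proof (indB a b ha) as HB.
  pose proof (indC a b ha) as HC.
  assert (hn : INR b = 0 \/ 1 <= INR b).
  { destruct b. left; reflexivity. right. rewrite S_INR. pose proof (pos_INR b). lra. }
  set (n := INR b) in *.
  set (F1 := n * (n - 1) / (2 * a)) in *.
  set (F2 := n * (n - 1) * (2 * n - 1) / (12 * a ^ 2)) in *.
  set (F3 := n ^ 2 * (n - 1) ^ 2 / (12 * a ^ 3)) in *.
  pose proof (pow_lt a b ha) as hP.
  assert (ha2 : 0 < a ^ 2) by (apply pow_lt; lra).
  assert (ha3 : 0 < a ^ 3) by (apply pow_lt; lra).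
  assert (hF2 : F2 <= n ^ 3 / (6 * a ^ 2)).
  { unfold F2. replace (n ^ 3 / (6 * a ^ 2)) with
      (n * (n - 1) * (2 * n - 1) / (12 * a ^ 2) + (n * (3 * n - 1)) / (12 * a ^ 2))
      by (field; lra).
    assert (0 <= (n * (3 * n - 1)) / (12 * a ^ 2)).
    { apply Rdiv_le_0_compat; [|lra]. destruct hn as [h|h]; [rewrite h|]; nra. }
    lra. }
  assert (hF3 : F3 <= n ^ 4 / (12 * a ^ 3)).
  { unfold F3. replace (n ^ 4 / (12 * a ^ 3)) with
      (n ^ 2 * (n - 1) ^ 2 / (12 * a ^ 3) + (n ^ 2 * (2 * n - 1)) / (12 * a ^ 3))
      by (field; lra).
    assert (0 <= (n ^ 2 * (2 * n - 1)) / (12 * a ^ 3)).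
    { apply Rdiv_le_0_compat; [|lra]. destruct hn as [h|h]; [rewrite h|]; nra. }
    lra. }
  assert (e1 : 0 < exp F1) by apply exp_pos.
  assert (e12 : 0 < exp (F1 - F2)) by apply exp_pos.
  split; split.
  - apply div_le2; [apply Rmult_lt_0_compat; lra|].
    replace (exp (- (n ^ 3 / (6 * a ^ 2))) * (a ^ b * exp F1))
      with (a ^ b * exp (F1 - n ^ 3 / (6 * a ^ 2))).
    + apply Rle_trans with (2 := HB). apply Rmult_le_compat_l; [lra|].
      apply exp_mono; lra.
    + unfold Rminus. rewrite exp_plus. ring.
  - apply div_le1; [apply Rmult_lt_0_compat; lra|]. lra.
  - apply div_le2; [apply Rmult_lt_0_compat; lra|]. lra.
  - apply div_le1; [apply Rmult_lt_0_compat; lra|].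
    apply Rle_trans with (1 := HC).
    replace (exp (n ^ 4 / (12 * a ^ 3)) * (a ^ b * exp (F1 - F2)))
      with (a ^ b * exp (F1 - F2 + n ^ 4 / (12 * a ^ 3))).
    + apply Rmult_le_compat_l; [lra|]. apply exp_mono; lra.
    + rewrite exp_plus. ring.
Qed.
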